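(* Let $P=\{x\in\mathbb R^n : Ax=b,\ Bx\le d\}$ with $A\in\mathbb R^{m_A\times n}$, $B\in\mathbb R^{m_B\times n}$ be a pointed polyhedron and let $x_0\in P$. Let $C_{A,B,x_0}$ be the face obtained by intersecting the cone $$C_{A,B}=\{(x,y^+,y^-)\in\mathbb R^{n+2m_B} : Ax=0,\ Bx=y^+-y^-,\ y^+,y^-\ge 0\}$$ with the hyperplanes $y^+_i=0$ for each $i\le m_B$ such that $(Bx_0)_i=d_i$. Then at most $m_B$ extreme rays of $C_{A,B,x_0}$ satisfy $y^+-y^-=0$, and the remaining extreme rays of $C_{A,B,x_0}$ give exactly the circuit directions of $P$ that are strictly feasible at $x_0$: they are the rays spanned by $(g,y^+,y^-)$ with $y^+_i=\max\{(Bg)_i,0\}$, $y^-_i=\max\{-(Bg)_i,0\}$, where $g$ ranges over the circuits $g\in\mathcal C(A,B)$ that are strictly feasible at $x_0$. Furthermore, each feasible direction $u$ at $x_0$ in $P$ has a representative $(u,y^+,y^-)$ in $C_{A,B,x_0}$.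
   Context: $P$ is pointed means $\operatorname{rank}\binom{A}{B}=n$. The set of circuits $\mathcal C(A,B)$ of $P$ consists of all $g\in\ker(A)\setminus\{0\}$ normalized to coprime integer components for which $Bg$ is support-minimal over $\{Bx : x\in\ker(A)\setminus\{0\}\}$, i.e. no $x\in\ker(A)\setminus\{0\}$ satisfies $\operatorname{supp}(Bx)\subsetneq\operatorname{supp}(Bg)$. A circuit direction is a positive scalar multiple of a circuit. A direction $u$ is (strictly) feasible at $x_0\in P$ if $x_0+\alpha u\in P$ for some $\alpha>0$. *)

(* Defs.v *)
From HB Require Import structures.
From mathcomp Require Import all_boot all_order all_algebra.
Set Implicit Arguments. Unset Strict Implicit. Unset Printing Implicit Defensive.
Import Order.TTheory GRing.Theory Num.Theory.
Local Open Scope ring_scope.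

Section Defs.
Variable R : realFieldType.

Definition in_poly mA mB n (A : 'M[R]_(mA, n)) (b : 'cV[R]_mA)
  (B : 'M[R]_(mB, n)) (d : 'cV[R]_mB) (x : 'cV[R]_n) : Prop :=
  A *m x = b /\ forall i, (B *m x) i 0 <= d i 0.

Definition pointed mA mB n (A : 'M[R]_(mA, n)) (B : 'M[R]_(mB, n)) : Prop :=
  \rank (col_mx A B) = n.

Definition feasible_dir mA mB n (A : 'M[R]_(mA, n)) (b : 'cV[R]_mA)
  (B : 'M[R]_(mB, n)) (d : 'cV[R]_mB) (x0 u : 'cV[R]_n) : Prop :=
  exists alpha : R, 0 < alpha /\ in_poly A b B d (x0 + alpha *: u).

Definition supp m (v : 'cV[R]_m) : {set 'I_m} := [set i | v i 0 != 0].

(* g is a circuit of P, up to positive scaling: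
   g in ker A, g <> 0, and B g is support-minimal among {B x | x in ker A \ 0}. *)
Definition circuit mA mB n (A : 'M[R]_(mA, n)) (B : 'M[R]_(mB, n))
  (g : 'cV[R]_n) : Prop :=
  A *m g = 0 /\ g != 0 /\
  ~ (exists x : 'cV[R]_n, [/\ A *m x = 0, x != 0 &
        supp (B *m x) \proper supp (B *m g)]).

Definition zx n mB (z : 'cV[R]_(n + mB + mB)) : 'cV[R]_n := usubmx (usubmx z).
Definition zyp n mB (z : 'cV[R]_(n + mB + mB)) : 'cV[R]_mB := dsubmx (usubmx z).
Definition zym n mB (z : 'cV[R]_(n + mB + mB)) : 'cV[R]_mB := dsubmx z.
Definition triple n mB (x : 'cV[R]_n) (yp ym : 'cV[R]_mB) : 'cV[R]_(n + mB + mB) :=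
  col_mx (col_mx x yp) ym.

Definition in_cone mA mB n (A : 'M[R]_(mA, n)) (B : 'M[R]_(mB, n))
  (z : 'cV[R]_(n + mB + mB)) : Prop :=
  [/\ A *m zx z = 0, B *m zx z = zyp z - zym z,
      forall i, 0 <= zyp z i 0 & forall i, 0 <= zym z i 0].

Definition in_face mA mB n (A : 'M[R]_(mA, n)) (B : 'M[R]_(mB, n))
  (d : 'cV[R]_mB) (x0 : 'cV[R]_n) (z : 'cV[R]_(n + mB + mB)) : Prop :=
  in_cone A B z /\ forall i, (B *m x0) i 0 = d i 0 -> zyp z i 0 = 0.

Definition extreme_ray N (K : 'cV[R]_N -> Prop) (r : 'cV[R]_N) : Prop :=
  [/\ K r, r != 0 &
      forall u v, K u -> K v -> r = u + v ->
        exists2 lu : R, 0 <= lu & exists2 lv : R, 0 <= lv & u = lu *: r /\ v = lv *: r].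

Definition same_ray N (r s : 'cV[R]_N) : Prop :=
  exists2 l : R, 0 < l & r = l *: s.

Definition pospart m (v : 'cV[R]_m) : 'cV[R]_m := \col_i Num.max (v i 0) 0.
Definition negpart m (v : 'cV[R]_m) : 'cV[R]_m := \col_i Num.max (- v i 0) 0.

End Defs.

(* Main.v *)
Require Import Defs.
From HB Require Import structures.
From mathcomp Require Import all_boot all_order all_algebra.
From mathcomp Require Import ring lra.
Import Order.TTheory GRing.Theory Num.Theory.
Local Open Scope ring_scope.

Lemma triple_zx {R : realFieldType} n mB (x : 'cV[R]_n) (p q : 'cV[R]_mB) :
  zx (triple x p q) = x.
Proof. by rewrite /zx /triple !col_mxKu. Qed.
Lemma triple_zyp {R : realFieldType} n mB (x : 'cV[R]_n) (p q : 'cV[R]_mB) :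
  zyp (triple x p q) = p.
Proof. by rewrite /zyp /triple col_mxKu col_mxKd. Qed.
Lemma triple_zym {R : realFieldType} n mB (x : 'cV[R]_n) (p q : 'cV[R]_mB) :
  zym (triple x p q) = q.
Proof. by rewrite /zym /triple col_mxKd. Qed.
Lemma tripleE {R : realFieldType} {n mB} (z : 'cV[R]_(n + mB + mB)) :
  triple (zx z) (zyp z) (zym z) = z.
Proof. by rewrite /triple /zx /zyp /zym !vsubmxK. Qed.
Lemma triple_add {R : realFieldType} n mB (x x' : 'cV[R]_n) (p q p' q' : 'cV[R]_mB) :
  triple x p q + triple x' p' q' = triple (x + x') (p + p') (q + q').
Proof. by rewrite /triple !add_col_mx. Qed.
Lemma triple_scale {R : realFieldType} n mB (c : R) (x : 'cV[R]_n) (p q : 'cV[R]_mB) :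
  c *: triple x p q = triple (c *: x) (c *: p) (c *: q).
Proof. by rewrite /triple !scale_col_mx. Qed.
Lemma triple_sub {R : realFieldType} n mB (x x' : 'cV[R]_n) (p q p' q' : 'cV[R]_mB) :
  triple x p q - triple x' p' q' = triple (x - x') (p - p') (q - q').
Proof. by rewrite -scaleN1r triple_scale triple_add !scaleN1r. Qed.
Lemma triple_inj {R : realFieldType} n mB (x x' : 'cV[R]_n) (p q p' q' : 'cV[R]_mB) :
  triple x p q = triple x' p' q' -> [/\ x = x', p = p' & q = q'].
Proof.
move=> h; split.
- by rewrite -(@triple_zx _ _ _ x p q) h triple_zx.
- by rewrite -(@triple_zyp _ _ _ x p q) h triple_zyp.
- by rewrite -(@triple_zym _ _ _ x p q) h triple_zym.
Qed.

Lemma in_faceT {R : realFieldType} mA mB n (A : 'M[R]_(mA, n)) (B : 'M[R]_(mB, n))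
  (dv : 'cV[R]_mB) (x0 : 'cV[R]_n) x p q :
  in_face A B dv x0 (triple x p q) <->
  [/\ A *m x = 0, B *m x = p - q, forall i, 0 <= p i 0, forall i, 0 <= q i 0 &
      forall i, (B *m x0) i 0 = dv i 0 -> p i 0 = 0].
Proof.
rewrite /in_face /in_cone triple_zx triple_zyp triple_zym.
split; [by case=> -[] | by case=> *].
Qed.

Arguments in_faceT {R mA mB n A B dv x0 x p q}.

Lemma pointed_inj {R : realFieldType} mA mB n (A : 'M[R]_(mA, n)) (B : 'M[R]_(mB, n))
  (x : 'cV[R]_n) : pointed A B -> A *m x = 0 -> B *m x = 0 -> x = 0.
Proof.
move=> hp ha hb.
have h : col_mx A B *m x = 0 by rewrite mul_col_mx ha hb col_mx0.
have hf : row_free (col_mx A B)^T by rewrite /row_free mxrank_tr hp.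
have : x^T *m (col_mx A B)^T == 0 by rewrite -trmx_mul h trmx0.
rewrite mulmx_free_eq0 // => /eqP hx.
by apply: trmx_inj; rewrite hx trmx0.
Qed.

Arguments pointed_inj {R mA mB n A B x}.

Lemma exists_small {R : realFieldType} m (a c : 'I_m -> R) :
  (forall i, 0 <= c i) -> (forall i, c i = 0 -> a i <= 0) ->
  exists2 e : R, 0 < e & forall i, e * a i <= c i.
Proof.
move=> c0 ca.
set S := \sum_i `|a i| / c i.
have S0 : 0 <= S by apply: sumr_ge0 => i _; apply: divr_ge0.
have S1 : 0 < 1 + S by lra.
exists (1 + S)^-1; first by rewrite invr_gt0.
move=> i; have [ci0|ci0] := eqVneq (c i) 0.
  rewrite ci0; apply: mulr_ge0_le0; last exact: ca.
  by rewrite invr_ge0 ltW.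
have cpos : 0 < c i by rewrite lt_def ci0 c0.
have hle : `|a i| / c i <= S.
  rewrite /S (bigD1 i) //= lerDl; apply: sumr_ge0 => j _; exact: divr_ge0.
have ht : `|a i| = `|a i| / c i * c i by rewrite divfK.
have h1 := ler_norm (a i).
have h2 : a i <= (1 + S) * c i.
  set t := `|a i| / c i in hle ht. nra.
rewrite -(ler_pM2l S1) mulrA mulfV ?mul1r //; lra.
Qed.
Lemma max_cases {R : realFieldType} (b : R) :
  (0 <= b /\ Num.max b 0 = b /\ Num.max (-b) 0 = 0) \/
  (b <= 0 /\ Num.max b 0 = 0 /\ Num.max (-b) 0 = -b).
Proof.
rewrite /Num.max; case: ifP => h1; case: ifP => h2.
- lra.
- move/negbT: h2; rewrite -leNgt => h2; right; split=> //; lra.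
- move/negbT: h1; rewrite -leNgt => h1; left; split=> //.
- move/negbT: h1; rewrite -leNgt => h1; move/negbT: h2; rewrite -leNgt => h2.
  have hb : b = 0 by lra.
  by left; rewrite hb oppr0.
Qed.

Lemma entry_scale {R : realFieldType} (b pu pv nu nv c : R) :
  Num.max b 0 = pu + pv -> Num.max (-b) 0 = nu + nv ->
  0 <= pu -> 0 <= pv -> 0 <= nu -> 0 <= nv -> pu - nu = c * b ->
  pu = c * Num.max b 0 /\ nu = c * Num.max (-b) 0.
Proof.
move=> h1 h2 ? ? ? ? h3.
case: (max_cases b) => [[hb [e1 e2]]|[hb [e1 e2]]]; rewrite e1 e2 in h1 h2 *.
  split; [|rewrite mulr0]; lra.
split; [rewrite mulr0|rewrite mulrN]; lra.
Qed.

Lemma entry_zero {R : realFieldType} (b pu pv nu nv : R) :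
  Num.max b 0 = pu + pv -> Num.max (-b) 0 = nu + nv ->
  0 <= pu -> 0 <= pv -> 0 <= nu -> 0 <= nv -> b = 0 -> pu - nu = 0.
Proof.
move=> h1 h2 ? ? ? ? hb; rewrite hb oppr0 maxxx in h1 h2; lra.
Qed.

Arguments entry_zero {R b pu pv nu nv}.
Arguments entry_scale {R b pu pv nu nv c}.

Lemma nz_entry {R : realFieldType} {m} {v : 'cV[R]_m} :
  v != 0 -> exists i, v i 0 != 0.
Proof.
move=> hv; apply/existsP; apply: contraNT hv => /existsPn h.
apply/eqP/matrixP => j k; rewrite (ord1 k) mxE; apply/eqP.
by move: (h j); rewrite negbK.
Qed.

Lemma entryD {R : realFieldType} {m} (u v : 'cV[R]_m) i : (u + v) i 0 = u i 0 + v i 0.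
Proof. by rewrite mxE. Qed.
Lemma entryB {R : realFieldType} {m} (u v : 'cV[R]_m) i : (u - v) i 0 = u i 0 - v i 0.
Proof. by rewrite !mxE. Qed.
Lemma entryZ {R : realFieldType} {m} (c : R) (u : 'cV[R]_m) i : (c *: u) i 0 = c * u i 0.
Proof. by rewrite mxE. Qed.

Lemma circuit_key {R : realFieldType} mA mB n (A : 'M[R]_(mA, n)) (B : 'M[R]_(mB, n))
  (dv : 'cV[R]_mB) (x0 g : 'cV[R]_n) xu pu nu xv pv nv :
  circuit A B g -> B *m g != 0 ->
  in_face A B dv x0 (triple xu pu nu) -> in_face A B dv x0 (triple xv pv nv) ->
  triple g (pospart (B *m g)) (negpart (B *m g)) = triple xu pu nu + triple xv pv nv ->
  exists2 c : R, 0 <= c &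
    triple xu pu nu = c *: triple g (pospart (B *m g)) (negpart (B *m g)).
Proof.
move=> [Ag [gn0 hmin]] Bg0 /in_faceT [Au Bu pu0 nu0 _] /in_faceT [Av Bv pv0 nv0 _].
rewrite triple_add => /triple_inj [eg eP eN].
have hP j : Num.max ((B *m g) j 0) 0 = pu j 0 + pv j 0.
  by rewrite -(entryD pu pv) -eP /pospart [RHS]mxE.
have hN j : Num.max (- (B *m g) j 0) 0 = nu j 0 + nv j 0.
  by rewrite -(entryD nu nv) -eN /negpart [RHS]mxE.
have hBu j : (B *m xu) j 0 = pu j 0 - nu j 0 by rewrite Bu entryB.
have zer j : (B *m g) j 0 = 0 -> (B *m xu) j 0 = 0.
  by move=> hb; rewrite hBu; exact: (entry_zero (hP j) (hN j) (pu0 j) (pv0 j) (nu0 j) (nv0 j) hb).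
have [i Hi] := nz_entry Bg0.
set w := (B *m xu) i 0 *: g - (B *m g) i 0 *: xu.
have hBw j : (B *m w) j 0 = (B *m xu) i 0 * (B *m g) j 0 - (B *m g) i 0 * (B *m xu) j 0.
  by rewrite /w mulmxBr -!scalemxAr !mxE.
have w0 : w = 0.
  apply/eqP/negPn/negP => hw; apply: hmin; exists w; split=> //.
    by rewrite /w mulmxBr -!scalemxAr Ag Au !scaler0 subr0.
  rewrite properE; apply/andP; split.
    apply/subsetP => j; rewrite !inE; apply: contraNN => /eqP hj.
    by rewrite hBw hj (zer j hj) !mulr0 subr0.
  apply/negP => /subsetP /(_ i); rewrite !inE Hi => /(_ isT).
  by rewrite hBw mulrC subrr eqxx.
set c := (B *m xu) i 0 / (B *m g) i 0.
have exu : xu = c *: g.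
  move/eqP: w0; rewrite /w subr_eq0 => /eqP h.
  by rewrite /c mulrC -scalerA h scalerA mulVf // scale1r.
have hBc j : pu j 0 - nu j 0 = c * (B *m g) j 0.
  by rewrite -hBu exu -scalemxAr mxE.
have c0 : 0 <= c.
  have := entry_scale (hP i) (hN i) (pu0 i) (pv0 i) (nu0 i) (nv0 i) (hBc i).
  case: (max_cases ((B *m g) i 0)) => [[hb [e1 e2]]|[hb [e1 e2]]];
    rewrite e1 e2 => -[h1 h2].
    have hb' : 0 < (B *m g) i 0 by rewrite lt_def Hi hb.
    have := pu0 i; rewrite h1 => h; nra.
  have hb' : (B *m g) i 0 < 0 by rewrite lt_def eq_sym Hi hb.
  have := nu0 i; rewrite h2 => h; nra.
exists c => //.
rewrite triple_scale -exu; congr triple; apply/matrixP => j k; rewrite (ord1 k) entryZ;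
  have [h1 h2] := entry_scale (hP j) (hN j) (pu0 j) (pv0 j) (nu0 j) (nv0 j) (hBc j).
  by rewrite h1 /pospart !mxE.
by rewrite h2 /negpart !mxE.
Qed.

Definition ev (R : realFieldType) {m} (i : 'I_m) : 'cV[R]_m := \col_j ((j == i)%:R).

Lemma evE {R : realFieldType} {m} (i j : 'I_m) : (ev R i) j 0 = (j == i)%:R.
Proof. by rewrite mxE. Qed.

Lemma E_part {R : realFieldType} mA mB n (A : 'M[R]_(mA, n)) (B : 'M[R]_(mB, n))
  (dv : 'cV[R]_mB) (x0 x : 'cV[R]_n) p q i (c : R) :
  in_face A B dv x0 (triple x p q) -> 0 < c -> c <= p i 0 -> c <= q i 0 ->
  in_face A B dv x0 (triple 0 (c *: ev R i) (c *: ev R i)) /\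
  in_face A B dv x0 (triple x p q - triple 0 (c *: ev R i) (c *: ev R i)).
Proof.
move=> /in_faceT [Ax Bx p0 q0 tight] c0 cp cq.
have ti j : (B *m x0) j 0 = dv j 0 -> j != i.
  move=> /tight hj; apply/negP => /eqP eji; rewrite eji in hj; clear Ax Bx; lra.
split; [apply/in_faceT|rewrite triple_sub; apply/in_faceT]; split.
- by rewrite mulmx0.
- by rewrite mulmx0 subrr.
- by move=> j; rewrite entryZ evE; case: (j == i); rewrite ?mulr1 ?mulr0; clear Ax Bx ti tight; lra.
- by move=> j; rewrite entryZ evE; case: (j == i); rewrite ?mulr1 ?mulr0; clear Ax Bx ti tight; lra.
- by move=> j /ti /negbTE hj; rewrite entryZ evE hj mulr0.
- by rewrite subr0.
- rewrite subr0 Bx; apply/matrixP => j k; rewrite (ord1 k) !entryB; clear Ax Bx ti tight; lra.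
- by move=> j; rewrite entryB entryZ evE; case: eqP => [->|_]; rewrite ?mulr1 ?mulr0 ?subr0 ?subr_ge0.
- by move=> j; rewrite entryB entryZ evE; case: eqP => [->|_]; rewrite ?mulr1 ?mulr0 ?subr0 ?subr_ge0.
- by move=> j hj; rewrite entryB entryZ evE (negbTE (ti j hj)) mulr0 subr0 tight.
Qed.

Arguments E_part {R mA mB n A B dv x0 x p q i c}.

Lemma ray_of_part {R : realFieldType} N (K : 'cV[R]_N -> Prop) r u :
  extreme_ray K r -> K u -> K (r - u) -> u != 0 ->
  exists2 l : R, 0 < l & r = l *: u.
Proof.
move=> [Kr rn0 hext] Ku Kv un0.
have e : r = u + (r - u) by rewrite addrC subrK.
have [lu lu0 [lv lv0 [eu _]]] := hext u (r - u) Ku Kv e.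
have lun0 : lu != 0 by apply: contraNneq un0 => h; rewrite eu h scale0r.
exists lu^-1; first by rewrite invr_gt0 lt_def lun0 lu0.
by rewrite eu scalerA mulVf // scale1r.
Qed.

Arguments ray_of_part {R N K r u}.

Lemma triple0 {R : realFieldType} n mB : triple (0 : 'cV[R]_n) (0 : 'cV[R]_mB) 0 = 0.
Proof. by rewrite /triple !col_mx0. Qed.

Lemma part1 {R : realFieldType} mA mB n (A : 'M[R]_(mA, n)) (B : 'M[R]_(mB, n))
  (dv : 'cV[R]_mB) (x0 x : 'cV[R]_n) p q :
  pointed A B -> extreme_ray (in_face A B dv x0) (triple x p q) -> p - q = 0 ->
  exists i, same_ray (triple x p q) (triple 0 (ev R i) (ev R i)).
Proof.
move=> hpt hext hpq; have [Fr rn0 _] := hext.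
have [Ax Bx p0 q0 tight] := in_faceT.1 Fr.
have x0' : x = 0 by apply: (pointed_inj hpt Ax); rewrite Bx hpq.
move/eqP: hpq; rewrite subr_eq0 => /eqP hpq.
have pn0 : p != 0.
  by apply: contraNneq rn0 => hp; rewrite x0' -hpq hp triple0.
have [i Hi] := nz_entry pn0.
have pi0 : 0 < p i 0 by rewrite lt_def Hi p0.
have hq : p i 0 <= q i 0 by rewrite -hpq lexx.
have [Fu Fv] := E_part Fr pi0 (lexx _) hq.
have un0 : triple (0 : 'cV[R]_n) (p i 0 *: ev R i) (p i 0 *: ev R i) != 0.
  apply/negP => /eqP h; rewrite -triple0 in h; case/triple_inj: h => _ h _.
  have := congr1 (fun v : 'cV[R]_mB => v i 0) h; rewrite /= entryZ evE eqxx mulr1 mxE => h'.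
  by rewrite h' eqxx in Hi.
have [l l0 er] := ray_of_part hext Fu Fv un0.
exists i; exists (l * p i 0); first by rewrite mulr_gt0.
by rewrite er !triple_scale !scalerA !scaler0.
Qed.
Lemma compl_pos {R : realFieldType} {a b : R} : 0 <= a -> 0 <= b -> (a = 0 \/ b = 0) ->
  a = Num.max (a - b) 0 /\ b = Num.max (- (a - b)) 0.
Proof.
move=> ha hb hab; case: (max_cases (a - b)) => [[h [e1 e2]]|[h [e1 e2]]]; rewrite e1 e2;
  case: hab => e; rewrite e in ha hb h *; split; lra.
Qed.

Lemma ar1 {R : realFieldType} (P Q y t e : R) : 0 <= P -> `|t| <= e ->
  e * `|y| <= `|P - Q| -> Q = 0 -> 0 <= P + t * y.
Proof.
move=> hP ht he hQ; rewrite hQ subr0 (ger0_norm hP) in he.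
have h1 : - (t * y) <= `|t| * `|y| by rewrite -normrM -normrN ler_norm.
have h2 : `|t| * `|y| <= e * `|y| by rewrite ler_wpM2r.
by have := le_trans h1 (le_trans h2 he); rewrite -subr_ge0 opprK.
Qed.

Lemma ar2 {R : realFieldType} (P Q y t e : R) : 0 <= Q -> `|t| <= e ->
  e * `|y| <= `|P - Q| -> P = 0 -> 0 <= Q + t * - y.
Proof.
move=> hQ ht he hP; rewrite hP sub0r normrN (ger0_norm hQ) in he.
have h1 : t * y <= `|t| * `|y| by rewrite -normrM ler_norm.
have h2 : `|t| * `|y| <= e * `|y| by rewrite ler_wpM2r.
by rewrite mulrN subr_ge0; apply: le_trans h1 (le_trans h2 he).
Qed.

Arguments ar1 {R P Q y t e}.
Arguments ar2 {R P Q y t e}.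

Lemma ar3 {R : realFieldType} (a b c : R) : a <= c - b -> b + a <= c.
Proof. lra. Qed.

Lemma ar4 {R : realFieldType} (e : R) : 0 < e -> `|e / 2| <= e /\ `|- (e / 2)| <= e.
Proof. move=> he; rewrite normrN ger0_norm; [split; lra | lra]. Qed.

Lemma solve_y {R : realFieldType} (xa ya h lu : R) : h != 0 ->
  2^-1 * (xa + h * ya) = lu * xa -> ya = ((2 * lu - 1) / h) * xa.
Proof.
move=> hn e.
have e2 : h * ya = (2 * lu - 1) * xa by lra.
by rewrite -[ya](mulKf hn) e2; ring.
Qed.

Lemma un0_lemma {R : realFieldType} n mB (i : 'I_mB) (c : R) : 0 < c ->
  triple (0 : 'cV[R]_n) (c *: ev R i) (c *: ev R i) != 0.
Proof.
move=> c0; apply/negP => /eqP h; rewrite -triple0 in h; case/triple_inj: h => _ h _.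
have := congr1 (fun v : 'cV[R]_mB => v i 0) h; rewrite /= entryZ evE eqxx mulr1 mxE => h'.
by rewrite h' ltxx in c0.
Qed.

Lemma face_scale {R : realFieldType} mA mB n (A : 'M[R]_(mA, n)) (B : 'M[R]_(mB, n))
  (dv : 'cV[R]_mB) (x0 : 'cV[R]_n) z (c : R) :
  in_face A B dv x0 z -> 0 <= c -> in_face A B dv x0 (c *: z).
Proof.
move=> Fz c0; rewrite -(tripleE (n:=n) (mB:=mB) z) in Fz *; rewrite triple_scale.
move/in_faceT: Fz => [h1 h2 h3 h4 h5]; apply/in_faceT; split.
- by rewrite -scalemxAr h1 scaler0.
- by rewrite -scalemxAr h2 scalerBr.
- by move=> j; rewrite entryZ mulr_ge0.
- by move=> j; rewrite entryZ mulr_ge0.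
- by move=> j hj; rewrite entryZ h5 ?mulr0.
Qed.

Lemma half_sum {R : realFieldType} N (z w : 'cV[R]_N) (t : R) :
  2^-1 *: (z + t *: w) + 2^-1 *: (z + (- t) *: w) = z.
Proof.
rewrite -scalerDr addrACA -scalerDl subrr scale0r addr0.
rewrite -mulr2n -scaler_nat scalerA mulVf ?scale1r //.
by rewrite pnatr_eq0.
Qed.

Arguments face_scale {R mA mB n A B dv x0 z c}.

Lemma part2 {R : realFieldType} mA mB n (A : 'M[R]_(mA, n)) (b : 'cV[R]_mA)
  (B : 'M[R]_(mB, n)) (dv : 'cV[R]_mB) (x0 x : 'cV[R]_n) p q :
  pointed A B -> in_poly A b B dv x0 ->
  extreme_ray (in_face A B dv x0) (triple x p q) -> p - q != 0 ->
  [/\ circuit A B x, feasible_dir A b B dv x0 x &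
      triple x p q = triple x (pospart (B *m x)) (negpart (B *m x))].
Proof.
move=> hpt hx0 hext hpq; have [Fr rn0 hext'] := hext.
have [Ax Bx p0 q0 tight] := in_faceT.1 Fr.
have compl j : p j 0 = 0 \/ q j 0 = 0.
  case: (eqVneq (p j 0) 0) => [|hp]; first by left.
  case: (eqVneq (q j 0) 0) => [|hq]; first by right.
  exfalso.
  have pp : 0 < p j 0 by rewrite lt_def hp p0.
  have qp : 0 < q j 0 by rewrite lt_def hq q0.
  have [c [c0 cp cq]] : exists c : R, [/\ 0 < c, c <= p j 0 & c <= q j 0].
    case: (leP (p j 0) (q j 0)) => h.
      by exists (p j 0); split; rewrite ?lexx.
    by exists (q j 0); split; rewrite ?lexx ?ltW.
  have [Fu Fv] := E_part Fr c0 cp cq.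
  have [l l0 er] := ray_of_part hext Fu Fv (un0_lemma n _ j _ c0).
  rewrite triple_scale scaler0 in er; case/triple_inj: er => ex _ _.
  by move/negP: hpq; apply; rewrite -Bx ex mulmx0.
have eP : p = pospart (B *m x) /\ q = negpart (B *m x).
  split; apply/matrixP => j k; rewrite (ord1 k) /pospart /negpart [RHS]mxE Bx entryB;
    by case: (compl_pos (p0 j) (q0 j) (compl j)).
have xn0 : x != 0 by apply: contraNneq hpq => ex; rewrite -Bx ex mulmx0.
have [al al0 hal] : exists2 al : R, 0 < al &
    forall j, al * (B *m x) j 0 <= dv j 0 - (B *m x0) j 0.
  apply: (exists_small mB (fun j => (B *m x) j 0) (fun j => dv j 0 - (B *m x0) j 0)).
    by move=> j; rewrite subr_ge0; exact: hx0.2 j.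
  move=> j /eqP; rewrite subr_eq0 => /eqP /esym /tight hp.
  by rewrite Bx entryB hp sub0r oppr_le0.
have feas : feasible_dir A b B dv x0 x.
  exists al; split=> //; split.
    by rewrite mulmxDr -scalemxAr Ax scaler0 addr0; exact: hx0.1.
  by move=> j; rewrite mulmxDr -scalemxAr entryD entryZ; apply: ar3.
split=> //; last by case: eP => <- <-.
split=> //; split=> //.
move=> [y [Ay yn0 hprop]].
have hsub j : (B *m x) j 0 = 0 -> (B *m y) j 0 = 0.
  move: hprop; rewrite properE => /andP [/subsetP hs _] hj.
  apply/eqP; apply: contraT => hy.
  by have := hs j; rewrite !inE hy hj eqxx => /(_ isT).
have [e e0 he] : exists2 e : R, 0 < e & forall j, e * `|(B *m y) j 0| <= `|(B *m x) j 0|.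
  apply: (exists_small mB (fun j => `|(B *m y) j 0|) (fun j => `|(B *m x) j 0|)).
    by move=> j; exact: normr_ge0.
  by move=> j /normr0_eq0 /hsub ->; rewrite normr0.
set pp : 'cV[R]_mB := \col_j (if q j 0 == 0 then (B *m y) j 0 else 0).
set nn : 'cV[R]_mB := \col_j (if q j 0 == 0 then 0 else - (B *m y) j 0).
have Ft t : `|t| <= e -> in_face A B dv x0 (triple x p q + t *: triple y pp nn).
  move=> ht; rewrite triple_scale triple_add; apply/in_faceT; split.
  - by rewrite mulmxDr -scalemxAr Ax Ay scaler0 addr0.
  - apply/matrixP => j k; rewrite (ord1 k) mulmxDr -scalemxAr entryB !entryD !entryZ Bx entryB.
    rewrite /pp /nn !mxE; case: (q j 0 == 0); ring.
  - move=> j; rewrite entryD entryZ /pp mxE; case: eqP => hq.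
      by apply: (ar1 (p0 j) ht _ hq); rewrite -entryB -Bx; exact: he.
    by rewrite mulr0 addr0.
  - move=> j; rewrite entryD entryZ /nn mxE; case: eqP => hq.
      by rewrite hq mulr0 addr0.
    case: (compl j) => // hp.
    by apply: (ar2 (q0 j) ht _ hp); rewrite -entryB -Bx; exact: he.
  - move=> j hj; rewrite entryD entryZ /pp mxE (tight j hj) add0r; case: eqP => hq; last by rewrite mulr0.
    by rewrite hsub ?mulr0 // Bx entryB (tight j hj) hq subr0.
have [he1 he2] := ar4 _ e0.
have hsum : triple x p q = 2^-1 *: (triple x p q + (e / 2) *: triple y pp nn) +
                           2^-1 *: (triple x p q + (- (e / 2)) *: triple y pp nn).
  by rewrite half_sum.
have h2 : (0 : R) <= 2^-1 by rewrite invr_ge0 ler0n.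
have [lu lu0 [lv lv0 [eu _]]] :=
  hext' _ _ (face_scale (Ft _ he1) h2) (face_scale (Ft _ he2) h2) hsum.
rewrite !triple_scale triple_add !triple_scale in eu; case/triple_inj: eu => ex _ _.
have en0 : e / 2 != 0 by rewrite mulf_neq0 // ?invr_eq0 ?gt_eqF // ltr0n.
set k := (2 * lu - 1) / (e / 2).
have ey : y = k *: x.
  apply/matrixP => j l; rewrite (ord1 l) entryZ; apply: (solve_y _ _ _ _ en0).
  by have := congr1 (fun v : 'cV[R]_n => v j 0) ex; rewrite /= !entryZ entryD entryZ.
have kn0 : k != 0 by apply: contraNneq yn0 => hk; rewrite ey hk scale0r.
have hs : supp (B *m y) = supp (B *m x).
  by apply/setP => j; rewrite !inE ey -scalemxAr entryZ mulf_eq0 (negbTE kn0).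
by rewrite hs properxx in hprop.
Qed.


Arguments part1 {R mA mB n A B dv x0 x p q}.
Arguments part2 {R mA mB n A b B dv x0 x p q}.
Arguments circuit_key {R mA mB n A B dv x0 g xu pu nu xv pv nv}.

Lemma posneg {R : realFieldType} m (v : 'cV[R]_m) : pospart v - negpart v = v.
Proof.
apply/matrixP => j k; rewrite (ord1 k) entryB /pospart /negpart !mxE.
by case: (max_cases (v j 0)) => [[h [e1 e2]]|[h [e1 e2]]]; rewrite e1 e2 ?subr0 ?sub0r ?opprK.
Qed.

Lemma pos_ge0 {R : realFieldType} m (v : 'cV[R]_m) j : 0 <= pospart v j 0.
Proof. by rewrite /pospart mxE le_max lexx orbT. Qed.
Lemma neg_ge0 {R : realFieldType} m (v : 'cV[R]_m) j : 0 <= negpart v j 0.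
Proof. by rewrite /negpart mxE le_max lexx orbT. Qed.

Lemma tight_pos {R : realFieldType} (al b0 bu dj : R) : 0 < al ->
  b0 + al * bu <= dj -> b0 = dj -> Num.max bu 0 = 0.
Proof.
move=> h0 h1 h2; case: (max_cases bu) => [[h [e1 e2]]|[h [e1 e2]]]; rewrite e1 //.
rewrite h2 in h1; nra.
Qed.

Arguments tight_pos {R al b0 bu dj}.

Lemma feas_face {R : realFieldType} mA mB n (A : 'M[R]_(mA, n)) (b : 'cV[R]_mA)
  (B : 'M[R]_(mB, n)) (dv : 'cV[R]_mB) (x0 u : 'cV[R]_n) :
  in_poly A b B dv x0 -> feasible_dir A b B dv x0 u ->
  in_face A B dv x0 (triple u (pospart (B *m u)) (negpart (B *m u))).
Proof.
move=> [hA hB] [al [al0 [hA' hB']]].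
have Au : A *m u = 0.
  rewrite mulmxDr -scalemxAr hA in hA'.
  have h : al *: (A *m u) = 0 by apply: (addrI b); rewrite addr0.
  by move/eqP: h; rewrite scaler_eq0 (gt_eqF al0) /= => /eqP.
apply/in_faceT; split=> //.
- by rewrite posneg.
- exact: pos_ge0.
- exact: neg_ge0.
move=> j hj; rewrite /pospart mxE; apply: (tight_pos al0 _ hj).
by have := hB' j; rewrite mulmxDr -scalemxAr entryD entryZ.
Qed.

Arguments feas_face {R mA mB n A b B dv x0 u}.

Theorem theorem5 (R : realFieldType) (mA mB n : nat)
  (A : 'M[R]_(mA, n)) (b : 'cV[R]_mA) (B : 'M[R]_(mB, n)) (d : 'cV[R]_mB)
  (x0 : 'cV[R]_n) :
  pointed A B -> in_poly A b B d x0 ->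
  let F := in_face A B d x0 in
  (* at most mB extreme rays of the face satisfy y+ - y- = 0 *)
  (exists s : seq 'cV[R]_(n + mB + mB), (size s <= mB)%N /\
     forall r, extreme_ray F r -> zyp r - zym r = 0 ->
       exists2 t, t \in s & same_ray r t) /\
  (* the remaining extreme rays are exactly those spanned by the
     (g, max(Bg,0), max(-Bg,0)) for feasible circuits g *)
  (forall r, extreme_ray F r -> zyp r - zym r != 0 ->
     exists2 g, circuit A B g /\ feasible_dir A b B d x0 g &
       same_ray r (triple g (pospart (B *m g)) (negpart (B *m g)))) /\
  (forall g, circuit A B g -> feasible_dir A b B d x0 g ->
     let r := triple g (pospart (B *m g)) (negpart (B *m g)) in
     extreme_ray F r /\ zyp r - zym r != 0) /\
  (* every feasible direction has a representative in the face *)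
  (forall u, feasible_dir A b B d x0 u ->
     exists yp ym : 'cV[R]_mB, F (triple u yp ym)).
Proof.
move=> hpt hx0 F; split; [|split; [|split]].
- exists [seq triple 0 (ev R i) (ev R i) | i <- enum 'I_mB].
  split; first by rewrite size_map size_enum_ord.
  move=> r hr hpq; have er := tripleE r.
  set x := zx r in er hpq; set p := zyp r in er hpq; set q := zym r in er hpq.
  rewrite -er in hr *.
  have [i hi] := part1 hpt hr hpq.
  exists (triple 0 (ev R i) (ev R i)) => //.
  by apply: map_f; rewrite mem_enum.
- move=> r hr hpq; have er := tripleE r.
  set x := zx r in er hpq; set p := zyp r in er hpq; set q := zym r in er hpq.
  rewrite -er in hr *.
  have [hc hf ef] := part2 hpt hx0 hr hpq.
  exists x => //; rewrite ef; exists 1; [exact: ltr01 | by rewrite scale1r].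
- move=> g hc hf /=.
  have Bg0 : B *m g != 0.
    by apply: contraNneq hc.2.1 => h; apply/eqP; exact: pointed_inj hpt hc.1 h.
  have Fr := feas_face hx0 hf.
  split; last by rewrite triple_zyp triple_zym posneg.
  split=> //.
    apply/negP => /eqP h; rewrite -triple0 in h; case/triple_inj: h => hg _ _.
    by move: hc.2.1; rewrite hg eqxx.
  move=> u v Fu Fv huv.
  rewrite -(tripleE u) -(tripleE v) in Fu Fv huv.
  have [cu cu0 eu] := circuit_key hc Bg0 Fu Fv huv.
  have huv' : triple g (pospart (B *m g)) (negpart (B *m g)) =
      triple (zx v) (zyp v) (zym v) + triple (zx u) (zyp u) (zym u) by rewrite huv addrC.
  have [cv cv0 ev] := circuit_key hc Bg0 Fv Fu huv'.
  exists cu => //; exists cv => //; split.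
    by rewrite -(tripleE u) eu.
  by rewrite -(tripleE v) ev.
- move=> u hu; exists (pospart (B *m u)), (negpart (B *m u)).
  exact: feas_face hx0 hu.
Qed.
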